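(* Let $S$ be a subcartesian space and $\mathcal{F}$ a family of vector fields on $S$. Then the function $\delta_{\mathcal{F}}:S\to\mathbb{Z}$, $\delta_{\mathcal{F}}(x)=\dim\check T^{\mathcal{F}}_xS$, is lower semicontinuous.
   Context: A subcartesian space is a paracompact, second-countable, Hausdorff differential space $(S,C^\infty(S))$ locally diffeomorphic to differential subspaces of Euclidean spaces. The (Zariski) tangent space $T_xS$ is the vector space of linear maps $v:C^\infty(S)\to\mathbb{R}$ with $v(fg)=f(x)v(g)+g(x)v(f)$. A derivation of $C^\infty(S)$ is a linear $X:C^\infty(S)\to C^\infty(S)$ satisfying Leibniz's rule; $X|_x(f):=(Xf)(x)$. Every derivation $X$ has, through each $x$, a unique maximal integral curve $t\mapsto\exp(tX)(x)$ (a smooth map from a maximal interval $I^X_x\ni0$ with $\frac{d}{dt}(f\circ\exp(tX)(x))=(Xf)(\exp(tX)(x))$). $X$ is a vector field if $(t,x)\mapsto\exp(tX)(x)$ is a local flow, i.e. its domain $\{(t,x):t\in I^X_x\}$ is open in $\mathbb{R}\times S$. For a family $\mathcal{F}$ of vector fields, $\check T^{\mathcal{F}}_xS$ is the linear span of $\{X|_x: X\in\mathcal{F}\}$ in $T_xS$. *)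

(* Defs.v *)
From HB Require Import structures.
From mathcomp Require Import all_boot all_order all_algebra.
From mathcomp Require Import all_classical all_reals all_analysis.
From mathcomp Require Import Rstruct Rstruct_topology.
Set Implicit Arguments. Unset Strict Implicit. Unset Printing Implicit Defensive.
Import Order.TTheory GRing.Theory Num.Theory.
Import numFieldNormedType.Exports.
Local Open Scope classical_set_scope.
Local Open Scope ring_scope.

Section Subcartesian.
Variable R : realType.

Fixpoint Ck {V : normedModType R} (k : nat) (f : V -> R) : Prop :=
  match k with
  | 0 => continuous f
  | k'.+1 => (forall x v, derivable f x v) /\
             (forall v, Ck k' (fun x => 'D_v f x))
  end.
Definition smooth {V : normedModType R} (f : V -> R) : Prop := forall k, Ck k f.

Variable S : Type.

(* The topology on S generated by a family C of functions S -> R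
   (smallest topology making each f in C continuous). *)
Definition dopen (C : set (S -> R)) (U : set S) : Prop :=
  forall x, U x -> exists (n : nat) (fs : 'I_n -> S -> R) (e : R),
    0 < e /\ (forall i, C (fs i)) /\
    (forall y, (forall i, `|fs i y - fs i x| < e) -> U y).

Definition diff_space (C : set (S -> R)) : Prop :=
  (forall (n : nat) (F : 'rV[R]_n -> R) (fs : 'I_n -> S -> R),
     smooth F -> (forall i, C (fs i)) -> C (fun x => F (\row_i fs i x))) /\
  (forall f : S -> R,
     (forall x, exists U g, dopen C U /\ U x /\ C g /\
                  (forall y, U y -> f y = g y)) -> C f).

(* smooth functions on the differential subspace A of (S, C), represented
   by arbitrary extensions S -> R (values off A are irrelevant). *)
Definition induced (C : set (S -> R)) (A : set S) (f : S -> R) : Prop :=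
  forall a, A a -> exists U g, dopen C U /\ U a /\ C g /\
    (forall y, A y -> U y -> f y = g y).

Definition hausdorff (C : set (S -> R)) : Prop :=
  forall x y, x <> y -> exists U V, dopen C U /\ dopen C V /\ U x /\ V y /\
    U `&` V = set0.

Definition second_countable (C : set (S -> R)) : Prop :=
  exists B : nat -> set S, (forall k, dopen C (B k)) /\
    (forall U, dopen C U -> forall x, U x -> exists k, B k x /\ B k `<=` U).

Definition paracompact (C : set (S -> R)) : Prop :=
  forall (I : Type) (W : I -> set S),
    (forall i, dopen C (W i)) -> (forall x, exists i, W i x) ->
    exists (J : Type) (V : J -> set S),
      (forall j, dopen C (V j)) /\ (forall x, exists j, V j x) /\
      (forall j, exists i, V j `<=` W i) /\
      (forall x, exists N, dopen C (N) /\ N x /\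
          finite_set [set j | N `&` V j !=set0]).
End Subcartesian.

Definition smooth_on_Rn (R : realType) (n : nat) (V : set 'rV[R]_n)
  (f : 'rV[R]_n -> R) : Prop := induced (@smooth R _) V f.

Definition diffeo_to_Rn (R : realType) (S : Type) (C : set (S -> R))
  (U : set S) (n : nat) (V : set 'rV[R]_n)
  (phi : S -> 'rV[R]_n) (psi : 'rV[R]_n -> S) : Prop :=
  (forall y, U y -> V (phi y) /\ psi (phi y) = y) /\
  (forall z, V z -> U (psi z) /\ phi (psi z) = z) /\
  (forall f, smooth_on_Rn V f -> induced C U (f \o phi)) /\
  (forall g, induced C U g -> smooth_on_Rn V (g \o psi)).

Definition subcartesian (R : realType) (S : Type) (C : set (S -> R)) : Prop :=
  diff_space C /\ hausdorff C /\ second_countable C /\ paracompact C /\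
  (forall x, exists (U : set S) (n : nat) (V : set 'rV[R]_n) phi psi,
      dopen C U /\ U x /\ diffeo_to_Rn C U V phi psi).

Definition derivation (R : realType) (S : Type) (C : set (S -> R))
  (X : (S -> R) -> (S -> R)) : Prop :=
  (forall f, C f -> C (X f)) /\
  (forall (a b : R) f g, C f -> C g ->
      forall y, X (fun z => a * f z + b * g z) y = a * X f y + b * X g y) /\
  (forall f g, C f -> C g ->
      forall y, X (fun z => f z * g z) y = f y * X g y + g y * X f y).

Definition is_interval (R : realType) (I : set R) : Prop :=
  forall a b t, I a -> I b -> a <= t <= b -> I t.

(* derivative of g at t within I (vacuous if t is isolated in I) *)
Definition deriv_within (R : realType) (I : set R) (g : R -> R) (t l : R) : Prop :=
  (fun s => (g s - g t) / (s - t)) @ within (fun s => I s /\ s <> t) (nbhs t)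
    --> l.

Definition integral_curve (R : realType) (S : Type) (C : set (S -> R))
  (X : (S -> R) -> (S -> R)) (x : S) (I : set R) (c : R -> S) : Prop :=
  is_interval I /\ I 0 /\ c 0 = x /\
  (forall f, C f -> induced (@smooth R _) I (f \o c) /\
     forall t, I t -> deriv_within I (f \o c) t (X f (c t))).

(* {(t, x) : t ∈ I^X_x}: I^X_x is the domain of the maximal integral curve,
   i.e. the union of the domains of all integral curves through x. *)
Definition flow_domain (R : realType) (S : Type) (C : set (S -> R))
  (X : (S -> R) -> (S -> R)) : set (R * S) :=
  fun p => exists I c, integral_curve C X p.2 I c /\ I p.1.

Definition open_RxS (R : realType) (S : Type) (C : set (S -> R))
  (W : set (R * S)) : Prop :=
  forall t x, W (t, x) -> exists (e : R) U, 0 < e /\ dopen C U /\ U x /\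
    forall s y, `|s - t| < e -> U y -> W (s, y).

Definition vector_field (R : realType) (S : Type) (C : set (S -> R))
  (X : (S -> R) -> (S -> R)) : Prop :=
  derivation C X /\ open_RxS C (flow_domain C X).

Definition in_span (R : realType) (S : Type) (C : set (S -> R))
  (F : set ((S -> R) -> (S -> R))) (x : S) (v : (S -> R) -> R) : Prop :=
  exists (m : nat) (Xs : 'I_m -> (S -> R) -> (S -> R)) (c : 'I_m -> R),
    (forall j, F (Xs j)) /\
    forall f, C f -> v f = \sum_(j < m) c j * Xs j f x.

Definition lin_indep (R : realType) (S : Type) (C : set (S -> R)) (k : nat)
  (vs : 'I_k -> (S -> R) -> R) : Prop :=
  forall a : 'I_k -> R, (forall f, C f -> \sum_(i < k) a i * vs i f = 0) ->
    forall i, a i = 0.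

(* delta_F(x) = dim \check T^F_x S >= k *)
Definition delta_ge (R : realType) (S : Type) (C : set (S -> R))
  (F : set ((S -> R) -> (S -> R))) (x : S) (k : nat) : Prop :=
  exists vs : 'I_k -> (S -> R) -> R,
    (forall i, in_span C F x (vs i)) /\ lin_indep C vs.

(* lower semicontinuity of delta_F: {y | delta_F(y) >= k} is a neighbourhood
   of each of its points, for every k. *)
Definition delta_lsc (R : realType) (S : Type) (C : set (S -> R))
  (F : set ((S -> R) -> (S -> R))) : Prop :=
  forall x k, delta_ge C F x k ->
    exists U, dopen C U /\ U x /\ forall y, U y -> delta_ge C F y k.

(* Main.v *)
Require Import Defs.
From mathcomp Require Import all_boot all_order all_algebra.
From mathcomp Require Import all_classical all_reals all_analysis.
From mathcomp Require Import Rstruct Rstruct_topology.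
From Stdlib Require Import Reals.
From mathcomp Require Import zify ring lra.
Set Implicit Arguments. Unset Strict Implicit. Unset Printing Implicit Defensive.
Import Order.TTheory GRing.Theory Num.Theory.
Local Open Scope ring_scope.

Lemma full_family (K : fieldType) (T : Type) (C : T -> Prop) (k : nat)
  (w : T -> 'rV[K]_k)
  (Hind : forall a : 'cV[K]_k, (forall f, C f -> w f *m a = 0) -> a = 0) :
  exists n (fs : 'I_n -> T), (forall l, C (fs l)) /\
     row_full (\matrix_l (w (fs l)) : 'M[K]_(n, k)).
Proof.
pose P (r : nat) := `[< exists n (A : 'M[K]_(n, k)),
   (forall l, exists f, C f /\ row l A = w f) /\ \rank A = r >].
have exP : exists r, P r.
  exists 0%N; apply/asboolP; exists 0%N, 0; split; last by rewrite mxrank0.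
  by move=> [].
have ubP : forall r, P r -> leq r k.
  move=> r /asboolP [n [A [_ <-]]]; exact: rank_leq_col.
case: (ex_maxnP exP ubP) => r /asboolP [n [A [HA Hr]]] Hmax.
have Hsub : forall f, C f -> (w f <= A)%MS.
  move=> f Cf.
  have Hle : leq (\rank (col_mx A (w f))) r.
    apply: Hmax; apply/asboolP; exists (addn n 1), (col_mx A (w f)); split=> //.
    move=> l; rewrite -[l]splitK; case: (fintype.split l) => l' /=.
      by rewrite rowKu; apply: HA.
    by exists f; split=> //; rewrite rowKd; apply/rowP => j; rewrite mxE (ord1 l').
  have Hs : (A <= col_mx A (w f))%MS by rewrite -addsmxE addsmxSl.
  have [Hle2 Heq] := mxrank_leqif_sup Hs.
  have : (col_mx A (w f) <= A)%MS.
    by rewrite -Heq eqn_leq Hle2 Hr Hle.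
  by rewrite col_mx_sub => /andP[].
exists n, (fun l => projT1 (cid (HA l))); split.
  by move=> l; case: (cid (HA l)) => g [].
have -> : (\matrix_l w (projT1 (cid (HA l))) : 'M[K]_(n, k)) = A.
  apply/row_matrixP => l; rewrite rowK; case: (cid (HA l)) => g [_ Hg] /=; by rewrite Hg.
apply/negPn/negP => Hnf.
have Hck : cokermx A != 0.
  apply/eqP => H0.
  have := mxrank_coker A; rewrite H0 mxrank0.
  move: Hnf; rewrite /row_full => /eqP Hnf Hz.
  have := rank_leq_col A; lia.
have [i [j Hij]] : exists i j, cokermx A i j != 0.
  apply/not_existsP => Hn; move/eqP: Hck; apply; apply/matrixP => i j.
  apply: contrapT => Hne; apply: (Hn i); exists j; apply/eqP => H; apply: Hne; by rewrite H mxE.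
have : col j (cokermx A) = 0.
  apply: Hind => f Cf.
  have := Hsub f Cf; rewrite submxE => /eqP H0.
  by rewrite colE mulmxA H0 mul0mx.
move/matrixP => /(_ i 0) H.
have E : col j (cokermx A) i 0 = cokermx A i j by rewrite [LHS]mxE.
by move: Hij; rewrite -E H mxE eqxx.
Qed.

Lemma perturb (R : realFieldType) k n (L : 'M[R]_(k,n)) (M0 M : 'M[R]_(n,k))
  (HL : L *m M0 = 1%:M) (a : 'cV[R]_k) (Ha : M *m a = 0) (eps : R)
  (Hb : forall l j, `|M l j - M0 l j| <= eps)
  (Hs : k%:R * (\sum_i \sum_l `|L i l|) * eps < 1) : a = 0.
Proof.
case: k L M0 M HL a Ha Hb Hs => [|k] L M0 M HL a Ha Hb Hs.
  by apply/matrixP => -[].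
case: n L M0 M HL Ha Hb Hs => [|n] L M0 M HL Ha Hb Hs.
  have : (1%:M : 'M[R]_k.+1) = 0.
    by rewrite -HL; apply/matrixP => i j; rewrite !mxE big_ord0.
  by move/eqP; rewrite (negbTE (matrix_nonzero1 _ _)).
have eps0 : 0 <= eps by exact: le_trans (normr_ge0 _) (Hb ord0 ord0).
set Ls := \sum_i \sum_l `|L i l|.
have HD : forall i j, `|(L *m M) i j - (i == j)%:R| <= Ls * eps.
  move=> i j.
  have -> : (i == j)%:R = (L *m M0) i j by rewrite HL mxE.
  rewrite !mxE -sumrB.
  apply: (le_trans (ler_norm_sum _ _ _)).
  apply: (@le_trans _ _ (\sum_l `|L i l| * eps)).
    apply: ler_sum => l _; rewrite -mulrBr normrM; apply: ler_wpM2l => //.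
  rewrite -mulr_suml; apply: ler_wpM2r => //.
  rewrite /Ls (bigD1 i) //= lerDl; apply: sumr_ge0 => i' _; apply: sumr_ge0 => *; exact: normr_ge0.
have Hz : forall i, a i 0 = - \sum_j ((L *m M) i j - (i == j)%:R) * a j 0.
  move=> i.
  have : (L *m M *m a) i 0 = 0 by rewrite -mulmxA Ha mulmx0 mxE.
  rewrite mxE => H0.
  have Hd : \sum_j ((i == j)%:R * a j 0) = a i 0.
    rewrite (bigD1 i) //= big1 ?addr0 ?eqxx ?mul1r //.
    by move=> j /negbTE; rewrite eq_sym => ->; rewrite mul0r.
  under eq_bigr do rewrite mulrBl.
  rewrite sumrB H0 Hd; ring.
set Sa := \sum_i `|a i 0|.
have HS : Sa <= k.+1%:R * Ls * eps * Sa.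
  rewrite {1}/Sa.
  apply: (@le_trans _ _ (\sum_(i < k.+1) (Ls * eps * Sa))).
    apply: ler_sum => i _; rewrite Hz normrN.
    apply: (le_trans (ler_norm_sum _ _ _)).
    rewrite /Sa mulr_sumr; apply: ler_sum => j _; rewrite normrM.
    apply: ler_wpM2r => //.
  rewrite sumr_const card_ord -mulr_natl le_eqVlt; apply/orP; left; apply/eqP; ring.
have Sa0 : Sa <= 0.
  have Sa_ge : 0 <= Sa by apply: sumr_ge0 => *; exact: normr_ge0.
  move: HS Hs; set c := k.+1%:R * Ls * eps => HS Hs.
  have H1 : (1 - c) * Sa <= 0 by rewrite mulrBl mul1r subr_le0.
  by move: H1; rewrite pmulr_rle0 // subr_gt0.
apply/matrixP => i j; rewrite (ord1 j) mxE; apply/normr0_eq0/eqP.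
rewrite eq_le normr_ge0 andbT.
apply: le_trans Sa0.
rewrite /Sa (bigD1 i) //= lerDl; apply: sumr_ge0 => *; exact: normr_ge0.
Qed.

Local Open Scope classical_set_scope.

Lemma dopen_sum (R : realType) (S : Type) (C : set (S -> R)) (T : finType)
  (G : T -> S -> R) (HG : forall t, C (G t)) (x : S) (e : R) :
  dopen C [set y | \sum_t `|G t y - G t x| < e].
Proof.
move=> z /= Hz.
set Sz := \sum_t `|G t z - G t x|.
set e' := (e - Sz) / (#|T|%:R + 1).
have N0 : 0 < #|T|%:R + 1 :> R by rewrite ltr_wpDl.
have He' : 0 < e' by rewrite divr_gt0 // subr_gt0.
exists #|T|, (fun i => G (enum_val i)), e'; split=> //; split.
  by move=> i; apply: HG.
move=> y Hy /=.
have Hy' : forall t, `|G t y - G t z| < e'.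
  by move=> t; have := Hy (enum_rank t); rewrite enum_rankK.
apply: (@le_lt_trans _ _ (Sz + #|T|%:R * e')).
  have -> : #|T|%:R * e' = \sum_(t : T) e' by rewrite sumr_const mulr_natl.
  rewrite /Sz -big_split /=.
  apply: ler_sum => t _.
  have -> : G t y - G t x = (G t y - G t z) + (G t z - G t x) by ring.
  apply: (le_trans (ler_normD _ _)).
  by have := Hy' t; lra.
have : #|T|%:R * e' < e - Sz.
  rewrite /e' mulrA ltr_pdivrMr //; have := Hz; rewrite -/Sz; nra.
lra.
Qed.

Lemma main_gen (R : realType) (S : Type) (C : set (S -> R))
  (F : set ((S -> R) -> (S -> R)))
  (HF : forall X, F X -> forall f, C f -> C (X f)) :
  delta_lsc C F.
Proof.
move=> x k [vs [Hspan Hli]].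
pose Q := {m : nat & ('I_m -> (S -> R) -> (S -> R)) * ('I_m -> R)}%type.
have H : forall i, exists q : Q, (forall j, F ((projT2 q).1 j)) /\
      forall f, C f -> vs i f = \sum_(j < projT1 q) (projT2 q).2 j * (projT2 q).1 j f x.
  move=> i; have [m [Xs [c Hc]]] := Hspan i; by exists (existT _ m (Xs, c)).
case: (choice H) => p Hp {H}.
pose m i := projT1 (p i).
pose Xs i : 'I_(m i) -> (S -> R) -> (S -> R) := (projT2 (p i)).1.
pose cf i : 'I_(m i) -> R := (projT2 (p i)).2.
have HXs : forall i j, F (Xs i j) by move=> i; case: (Hp i).
have Hvs : forall i f, C f -> vs i f = \sum_(j < m i) cf i j * Xs i j f x
  by move=> i; case: (Hp i).
pose w f : 'rV[R]_k := \row_i vs i f.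
have Hind : forall a : 'cV[R]_k, (forall f, C f -> w f *m a = 0) -> a = 0.
  move=> a Ha; apply/matrixP => i j; rewrite (ord1 j) mxE.
  apply: (Hli (fun i => a i 0)) => // f Cf.
  have := Ha f Cf => /matrixP /(_ 0 0); rewrite !mxE => H0; rewrite -[RHS]H0.
  by apply: eq_bigr => i' _; rewrite mxE mulrC.
have [n [fs [Cfs Hfull]]] := full_family Hind.
have [L HL] := row_fullP Hfull.
pose Wy y : 'M[R]_(n, k) := \matrix_(l, i) \sum_(j < m i) cf i j * Xs i j (fs l) y.
have HW : \matrix_l w (fs l) = Wy x.
  by apply/matrixP => l i; rewrite !mxE (Hvs _ _ (Cfs l)).
rewrite HW in HL.
pose T := ('I_n * {i : 'I_k & 'I_(m i)})%type.
pose G (t : T) := Xs (tag t.2) (tagged t.2) (fs t.1).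
have CG : forall t, C (G t) by move=> t; apply: HF => //; exact: Cfs.
pose Ls := \sum_i \sum_l `|L i l|.
pose Cc := 1 + \sum_i \sum_(j < m i) `|cf i j|.
have Ls0 : 0 <= Ls by apply: sumr_ge0 => *; apply: sumr_ge0 => *; exact: normr_ge0.
have Cc0 : 0 < Cc.
  by rewrite ltr_wpDr //; apply: sumr_ge0 => *; apply: sumr_ge0 => *; exact: normr_ge0.
pose e := 1 / ((k%:R * Ls + 1) * Cc).
have e0 : 0 < e.
  rewrite divr_gt0 // mulr_gt0 // ltr_wpDl //; exact: mulr_ge0.
exists [set y | \sum_t `|G t y - G t x| < e]; split; first exact: dopen_sum.
split; first by rewrite /= big1 // => t _; rewrite subrr normr0.
move=> y /= Hy.
exists (fun i f => \sum_(j < m i) cf i j * Xs i j f y); split.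
  by move=> i; exists (m i), (Xs i), (cf i); split.
move=> a Ha.
have Hbd : forall t, `|G t y - G t x| <= e.
  move=> t; apply: ltW; apply: le_lt_trans Hy.
  rewrite (bigD1 t) //= lerDl; apply: sumr_ge0 => *; exact: normr_ge0.
have Hacol : Wy y *m (\col_i a i) = 0.
  apply/matrixP => l j; rewrite (ord1 j) !mxE -[RHS](Ha (fs l) (Cfs l)).
  by apply: eq_bigr => i _; rewrite !mxE mulrC.
have Heps : forall l i, `|Wy y l i - Wy x l i| <= Cc * e.
  move=> l i; rewrite !mxE -sumrB.
  apply: (le_trans (ler_norm_sum _ _ _)).
  apply: (@le_trans _ _ (\sum_(j < m i) `|cf i j| * e)).
    apply: ler_sum => j _; rewrite -mulrBr normrM; apply: ler_wpM2l => //.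
    exact: (Hbd (l, @Tagged _ i (fun i => 'I_(m i)) j)).
  rewrite -mulr_suml; apply: ler_wpM2r; first exact: ltW.
  rewrite /Cc (bigD1 i) //=.
  have : 0 <= \sum_(i' | i' != i) \sum_(j < m i') `|cf i' j|.
    by apply: sumr_ge0 => *; apply: sumr_ge0 => *; exact: normr_ge0.
  lra.
have kL0 : 0 <= k%:R * Ls by apply: mulr_ge0.
have Hsm : k%:R * Ls * (Cc * e) < 1.
  have -> : k%:R * Ls * (Cc * e) = k%:R * Ls / (k%:R * Ls + 1).
    rewrite /e; field; apply/andP; split; rewrite gt_eqF //; lra.
  rewrite ltr_pdivrMr; lra.
have := perturb HL Hacol Heps Hsm.
move/matrixP => Hz i; have := Hz i 0; rewrite !mxE => ->; done.
Qed.

Theorem lemmal (S : Type) (C : set (S -> R)) (HS : subcartesian C)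
  (F : set ((S -> R) -> (S -> R)))
  (HF : forall X, F X -> vector_field C X) :
  delta_lsc C F.
Proof.
apply: main_gen => X /HF [[H _] _]; exact: H.
Qed.
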